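(* Let $R$ be a commutative ring with identity that is not an integral domain. If $R$ is not isomorphic to $\mathbb{Z}_2 \times D$ for any integral domain $D$, then $\gamma_t(\Gamma(R)) = \gamma(\Gamma(R))$ (as cardinal numbers).
   Context: All rings are commutative with identity $1$. $Z(R)$ denotes the set of zero-divisors of $R$ and $Z(R)^* = Z(R)\setminus\{0\}$. The zero-divisor graph $\Gamma(R)$ has vertex set $Z(R)^*$; distinct vertices $r,s$ are adjacent iff $rs=0$, and a vertex $x$ is additionally considered adjacent to itself (looped) iff $x^2=0$. A set $X\subseteq Z(R)^*$ is a dominating set if every vertex not in $X$ is adjacent to some element of $X$; it is a total dominating set if every vertex $v$ (including those in $X$) is adjacent to some $x\in X$, where self-adjacency $x=v$ with $x^2=0$ counts. $\gamma(\Gamma(R))$ and $\gamma_t(\Gamma(R))$ are the minimum cardinalities of a dominating set and of a total dominating set, respectively. *)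

(* Defs.v *)
From HB Require Import structures.
From mathcomp Require Import all_boot all_order all_algebra.
From mathcomp Require Import boolp classical_sets cardinality.
Set Implicit Arguments. Unset Strict Implicit. Unset Printing Implicit Defensive.
Import GRing.Theory.
Local Open Scope ring_scope.
Local Open Scope classical_set_scope.

(* Z(R)^* : the nonzero zero-divisors of R (vertex set of Gamma(R)). *)
Definition zdiv_star (R : comNzRingType) : set R :=
  [set x | x != 0 /\ exists y : R, y != 0 /\ x * y = 0].
Arguments zdiv_star : clear implicits.

(* Adjacency in Gamma(R): distinct vertices x,y adjacent iff x*y = 0;
   a vertex x is looped iff x^2 = x*x = 0.  Uniformly: x*y = 0. *)
Definition zd_adj (R : comNzRingType) (x y : R) : Prop := x * y = 0.

Definition dominating (R : comNzRingType) (X : set R) : Prop :=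
  X `<=` zdiv_star R /\
  forall v, zdiv_star R v -> ~ X v -> exists2 x, X x & zd_adj x v.

Definition total_dominating (R : comNzRingType) (X : set R) : Prop :=
  X `<=` zdiv_star R /\
  forall v, zdiv_star R v -> exists2 x, X x & zd_adj x v.

Definition min_dominating (R : comNzRingType) (X : set R) : Prop :=
  dominating X /\ forall Z : set R, dominating Z -> (X #<= Z)%card.

Definition min_total_dominating (R : comNzRingType) (X : set R) : Prop :=
  total_dominating X /\ forall Z : set R, total_dominating Z -> (X #<= Z)%card.

Definition gammat_eq_gamma (R : comNzRingType) : Prop :=
  exists X Y : set R, [/\ min_dominating X, min_total_dominating Y & (X #= Y)%card].

Definition ring_iso (R S : comNzRingType) (f : R -> S) : Prop :=
  bijective f /\ [/\ f 1 = 1, {morph f : x y / x + y} & {morph f : x y / x * y}].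

(* Main.v *)
Require Import Defs.
From HB Require Import structures.
From mathcomp Require Import all_boot all_order all_algebra.
From mathcomp Require Import boolp classical_sets cardinality.
From mathcomp Require Import functions zify.
Set Implicit Arguments. Unset Strict Implicit. Unset Printing Implicit Defensive.
Import GRing.Theory.
Local Open Scope classical_set_scope.

Lemma min_card_exists (T : Type) (P : set (set T)) (X0 : set T) :
  P X0 -> exists X, P X /\ forall Z, P Z -> (X #<= Z)%card.
Proof.
move=> PX0.
pose Q (D : set (set T -> T)) :=
  (forall t, D t -> forall Z, P Z -> Z (t Z)) /\
  (forall Z, P Z -> forall t s, D t -> D s -> t Z = s Z -> t = s).
have [D [[DP Dinj] Dmax]] : exists D, Q D /\ forall B, D `<` B -> ~ Q B.
  apply: (@Zorn_bigcup _ Q) => F FQ Ftot; split.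
    by move=> t [D FD Dt] Z PZ; exact: ((FQ D FD).1 t Dt Z PZ).
  move=> Z PZ t s [D1 FD1 D1t] [D2 FD2 D2s].
  have [D12|D21] := Ftot _ _ FD1 FD2.
    exact: ((FQ D2 FD2).2 Z PZ t s (D12 _ D1t) D2s).
  exact: ((FQ D1 FD1).2 Z PZ t s D1t (D21 _ D2s)).
have [Z0 [PZ0 Z0surj]] : exists Z0, P Z0 /\ forall z, Z0 z -> exists2 t, D t & t Z0 = z.
  apply: contrapT => nH.
  have H : forall Z0, ~ (P Z0 /\ forall z, Z0 z -> exists2 t, D t & t Z0 = z).
    by move=> Z0 HZ; apply: nH; exists Z0.
  have H' : forall Z, P Z -> exists z, Z z /\ forall t, D t -> t Z <> z.
    move=> Z PZ; have := H Z; move/not_andP => [//|/existsNP [z /not_implyP [Zz]]].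
    by move/forall2NP => Hz; exists z; split => // t Dt tZ; case: (Hz t) => //.
  have [z0 [X0z0 _]] := H' _ PX0.
  pose t0 := fun Z => if pselect (P Z) is left PZ then projT1 (cid (H' Z PZ)) else z0.
  have t0P : forall Z, P Z -> Z (t0 Z) /\ forall t, D t -> t Z <> t0 Z.
    move=> Z PZ; rewrite /t0; case: pselect => // PZ'.
    by case: (cid (H' Z PZ')) => z [Zz Hz] /=; split => // t Dt; exact: Hz.
  have t0D : ~ D t0 by move=> Dt0; exact: ((t0P _ PX0).2 _ Dt0).
  suff [DB QB] : D `<` D `|` [set t0] /\ Q (D `|` [set t0]).
    exact: Dmax _ DB QB.
  split.
    split; first by move=> t Dt; left.
    by move=> Dt; apply: t0D; apply: Dt; right.
  split.
    by move=> t [Dt|->] Z PZ; [exact: (DP t Dt Z PZ)|exact: (t0P _ PZ).1].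
  move=> Z PZ t s [Dt|->] [Ds|->] eq.
  - exact: Dinj eq.
  - by case: ((t0P _ PZ).2 _ Dt).
  - by case: ((t0P _ PZ).2 _ Ds).
  - by [].
exists Z0; split => // Z PZ.
have -> : Z0 = (fun t => t Z0) @` D.
  apply/seteqP; split => [z /Z0surj [t Dt <-]|_ [t Dt <-]]; first by exists t.
  exact: (DP t Dt Z0 PZ0).
apply: card_le_trans (card_image_le _ _) _.
have inj : {in D &, injective (fun t => t Z)}.
  by move=> t s; rewrite !inE => Dt Ds; exact: (Dinj Z PZ t s Dt Ds).
rewrite -(card_le_eql (inj_card_eq inj)).
apply: subset_card_le => _ [t Dt <-]; exact: (DP t Dt Z PZ).
Qed.

Lemma card_le_fun (T : Type) (U : pointedType) (A : set T) (B : set U) :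
  (A #<= B)%card -> exists f : T -> U, (forall x, A x -> B (f x)) /\ {in A &, injective f}.
Proof.
move=> /pcard_leP /injfunPex [f ff fi]; exists f; split => //.
Qed.

Lemma card_Xbool (T : Type) (X : set T) :
  infinite_set X -> (X `*` [set: bool] #<= X)%card.
Proof.
elim/Ppointed: T => T in X *.
  by move=> Xinf; exfalso; apply: Xinf; rewrite (empty_eq0 X); exact: finite_set0.
move=> Xinf.
pose Q (G : set (T * (T * bool))) :=
  [/\ forall d p, G (d,p) -> X d,
      forall d1 d2 p, G (d1,p) -> G (d2,p) -> d1 = d2,
      forall d p1 p2, G (d,p1) -> G (d,p2) -> p1 = p2,
      forall d e b, G (d,(e,b)) -> exists p, G (e,p) &
      forall d p b, G (d,p) -> exists d', G (d', (d,b))].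
have [G [[GX Gf Gi Gr Gc] Gmax]] : exists G, Q G /\ forall B, G `<` B -> ~ Q B.
  apply: (@Zorn_bigcup _ Q) => F FQ Ftot; split.
  - move=> d p [H FH Hd]; have [h1 _ _ _ _] := FQ H FH; exact: h1 Hd.
  - move=> d1 d2 p [H1 FH1 H1d] [H2 FH2 H2d].
    have [H12|H21] := Ftot _ _ FH1 FH2.
      by have [_ h2 _ _ _] := FQ H2 FH2; exact: h2 _ _ _ (H12 _ H1d) H2d.
    by have [_ h2 _ _ _] := FQ H1 FH1; exact: h2 _ _ _ H1d (H21 _ H2d).
  - move=> d p1 p2 [H1 FH1 H1d] [H2 FH2 H2d].
    have [H12|H21] := Ftot _ _ FH1 FH2.
      by have [_ _ h3 _ _] := FQ H2 FH2; exact: h3 _ _ _ (H12 _ H1d) H2d.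
    by have [_ _ h3 _ _] := FQ H1 FH1; exact: h3 _ _ _ H1d (H21 _ H2d).
  - move=> d e b [H FH Hd]; have [_ _ _ h4 _] := FQ H FH.
    by have [p Hp] := h4 _ _ _ Hd; exists p; exists H.
  - move=> d p b [H FH Hd]; have [_ _ _ _ h5] := FQ H FH.
    by have [d' Hp] := h5 _ _ b Hd; exists d'; exists H.
pose Dset := [set d | exists p, G (d,p)].
have DX : Dset `<=` X by move=> d [p Gp]; exact: GX Gp.
have Ffin : finite_set (X `\` Dset).
  apply: contrapT => /infiniteP /card_le_fun [c [cXD cinj]].
  have ci : forall n m, c n = c m -> n = m by move=> n m; apply: cinj; rewrite inE.
  have cnD : forall n, ~ Dset (c n) by move=> n; case: (cXD n I).
  pose E := [set (c n, (c n./2, odd n)) | n in [set: nat]].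
  apply: (Gmax (G `|` E)).
    split; first by move=> x Gx; left.
    move=> /(_ (c 0%N, (c 0%N, false))) H.
    have G0 : G (c 0%N, (c 0%N, false)) by apply: H; right; exists 0%N.
    by apply: (cnD 0%N); exists (c 0%N, false).
  split.
  - move=> d p [/GX //|[n _ [<- _]]]; by case: (cXD n I).
  - move=> d1 d2 p [G1|[n _ [<- <-]]] [G2|[m _ [<- Ep]]].
    + exact: Gf G1 G2.
    + by move: G1; rewrite -Ep => /Gr [q Gq]; case: (cnD m./2); exists q.
    + by move: G2 => /Gr [q Gq]; case: (cnD n./2); exists q.
    + case: Ep => /ci Enm Eodd; congr c.
      by rewrite -[n]odd_double_half -[m]odd_double_half Enm Eodd.
  - move=> d p1 p2 [G1|[n _ [Ed <-]]] [G2|[m _ [Ed' <-]]].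
    + exact: Gi G1 G2.
    + by case: (cnD m); rewrite Ed'; exists p1.
    + by case: (cnD n); rewrite Ed; exists p2.
    + by move: Ed; rewrite -Ed' => /ci ->.
  - move=> d e b [/Gr [p Gp]|[n _ [_ <- _]]].
    + by exists p; left.
    + by exists (c n./2./2, odd n./2); right; exists n./2.
  - move=> d p b [/(Gc _ _ b) [d' Gd']|[n _ [<- _]]].
    + by exists d'; left.
    + exists (c (b + n.*2)); right; exists (b + n.*2) => //.
      rewrite half_bit_double; congr (_, (_, _)).
      by rewrite oddD odd_double addbF; case: b.
have Dinf : infinite_set Dset.
  move=> Dfin; apply: Xinf.
  have -> : X = Dset `|` (X `\` Dset).
    apply/seteqP; split => [x Xx|x [/DX//|[]//]].
    by have [Dx|nDx] := pselect (Dset x); [left|right].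
  by rewrite finite_setU.
have [c [cD cinj]] := card_le_fun ((infiniteP _).1 Dinf).
have ci : forall n m, c n = c m -> n = m by move=> n m; apply: cinj; rewrite inE.
have [k /card_le_fun [idx [idxk idxi]]] := (finite_set_leP _).1 Ffin.
pose f x b := xget point [set d | G (d,(x,b))].
have fP : forall x b, Dset x -> G (f x b, (x,b)).
  move=> x b [p Gp]; apply: (@xgetPex _ point [set d | G (d,(x,b))]); exact: Gc Gp.
pose sgm y := if pselect (exists n, c n = y) then c (xget 0%N [set n | c n = y] + k.*2)%N else y.
have sgmD : forall y, Dset y -> Dset (sgm y).
  by move=> y Dy; rewrite /sgm; case: pselect => [e|ne] //; exact: cD.
have sgmi : forall y1 y2, sgm y1 = sgm y2 -> y1 = y2.
  move=> y1 y2; rewrite /sgm.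
  case: pselect => [e1|ne1]; case: pselect => [e2|ne2].
  - move/ci/eqP; rewrite eqn_add2r => /eqP E.
    by rewrite -(xgetPex 0%N e1) -(xgetPex 0%N e2) /= E.
  - by move=> E; exfalso; apply: (ne2); eexists; exact: E.
  - by move=> E; exfalso; apply: (ne1); eexists; exact: (esym E).
  - by [].
have sgmc : forall y m, sgm y = c m -> (k.*2 <= m)%N.
  move=> y m; rewrite /sgm; case: pselect => [e1|ne1].
    by move/ci => <-; rewrite leq_addl.
  by move=> E; exfalso; apply: (ne1); exists m.
pose psi (xb : (T * bool)%type) := if pselect (Dset (fst xb)) then sgm (f (fst xb) (snd xb))
  else c (nat_of_bool (snd xb) + (idx (fst xb)).*2)%N.
suff [psiX psii] : (forall xb, (X `*` [set: bool]) xb -> X (psi xb)) /\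
    {in X `*` [set: bool] &, injective psi}.
  rewrite -(card_le_eql (inj_card_eq psii)); apply: subset_card_le => _ [xb Hxb <-].
  exact: psiX.
split.
  move=> [x b] /= _; rewrite /psi /=; case: pselect => Dx; apply: DX.
    by apply: sgmD; exists (x, b); exact: fP.
  exact: cD.
move=> [x1 b1] [x2 b2]; rewrite !inE => -[/= X1 _] [/= X2 _]; rewrite /psi /=.
case: pselect => D1; case: pselect => D2.
- move=> /sgmi E; have := fP x2 b2 D2; rewrite -E => G2.
  exact: Gi (fP x1 b1 D1) G2.
- move=> /sgmc; have : (idx x2 < k)%N by apply: idxk; split.
  by case: b2 => /= h1 h2; lia.
- move=> /esym /sgmc; have : (idx x1 < k)%N by apply: idxk; split.
  by case: b1 => /= h1 h2; lia.
- move=> /ci E.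
  have Eb : b1 = b2.
    have := congr1 odd E; rewrite !oddD !odd_double !addbF.
    by move: (b1) (b2) => [] [].
  have Ei : idx x1 = idx x2 by have := congr1 half E; rewrite !half_bit_double.
  by rewrite Eb (idxi x1 x2) // inE.
Qed.

Local Open Scope ring_scope.

Section DomCons.
Variables (R : comNzRingType) (x : R).
Hypotheses (xx : x * x = x) (x1 : x != 1) (x0 : x != 0) (x2 : x + x = 0)
  (F3 : forall r, x * r = 0 \/ x * r = x)
  (dom : forall a b, x * a = 0 -> x * b = 0 -> a * b = 0 -> a = 0 \/ b = 0).

Record Dt := MkDt { dval : R; dP : x * dval == 0 }.
HB.instance Definition _ := [isSub for dval].
HB.instance Definition _ := [Choice of Dt by <:].

Lemma dvalK (a b : Dt) : dval a = dval b -> a = b.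
Proof. exact: val_inj. Qed.

Definition dzero := MkDt (introT eqP (mulr0 x)).
Lemma dopp_proof (a : Dt) : x * (- dval a) == 0.
Proof. by rewrite mulrN (eqP (dP a)) oppr0. Qed.
Definition dopp (a : Dt) := MkDt (dopp_proof a).
Lemma dadd_proof (a b : Dt) : x * (dval a + dval b) == 0.
Proof. by rewrite mulrDr (eqP (dP a)) (eqP (dP b)) addr0. Qed.
Definition dadd (a b : Dt) := MkDt (dadd_proof a b).
Lemma dmul_proof (a b : Dt) : x * (dval a * dval b) == 0.
Proof. by rewrite mulrA (eqP (dP a)) mul0r. Qed.
Definition dmul (a b : Dt) := MkDt (dmul_proof a b).
Lemma done_proof : x * (1 - x) == 0.
Proof. by rewrite mulrBr mulr1 xx subrr. Qed.
Definition done := MkDt done_proof.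

Lemma daddA : associative dadd.
Proof. by move=> a b c; apply: dvalK; rewrite /= addrA. Qed.
Lemma daddC : commutative dadd.
Proof. by move=> a b; apply: dvalK; rewrite /= addrC. Qed.
Lemma dadd0 : left_id dzero dadd.
Proof. by move=> a; apply: dvalK; rewrite /= add0r. Qed.
Lemma daddN : left_inverse dzero dopp dadd.
Proof. by move=> a; apply: dvalK; rewrite /= addNr. Qed.
HB.instance Definition _ := GRing.isZmodule.Build Dt daddA daddC dadd0 daddN.

Lemma dxa (a : Dt) : dval a * x = 0.
Proof. by rewrite mulrC (eqP (dP a)). Qed.

Lemma dmulA : associative dmul.
Proof. by move=> a b c; apply: dvalK; rewrite /= mulrA. Qed.
Lemma dmulC : commutative dmul.
Proof. by move=> a b; apply: dvalK; rewrite /= mulrC. Qed.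
Lemma dmul1 : left_id done dmul.
Proof. by move=> a; apply: dvalK; rewrite /= mulrBl mul1r [x * _](eqP (dP a)) subr0. Qed.
Lemma dmulDl : left_distributive dmul dadd.
Proof. by move=> a b c; apply: dvalK; rewrite /= mulrDl. Qed.
Lemma done_neq0 : done != dzero.
Proof.
apply/eqP => /(congr1 dval) /= /eqP; rewrite subr_eq0 => /eqP E.
by move: x1; rewrite -E eqxx.
Qed.
HB.instance Definition _ := GRing.Zmodule_isComNzRing.Build Dt dmulA dmulC dmul1 dmulDl done_neq0.

Definition dunit : {pred Dt} := fun a => `[< exists b : Dt, b * a = 1 >].
Definition dinv (a : Dt) : Dt :=
  if pselect (exists b : Dt, b * a = 1) is left H then projT1 (cid H) else a.
Lemma dmulVx : {in dunit, left_inverse 1 dinv *%R}.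
Proof.
move=> a Ha; have H0 : exists b : Dt, b * a = 1.
  by move: Ha; rewrite /in_mem /= /dunit => /asboolP.
rewrite /dinv; case: pselect => [H'|nH]; last by case: nH.
by case: (cid H').
Qed.
Lemma dunitPl : forall a b : Dt, b * a = 1 -> dunit a.
Proof. by move=> a b ba; apply/asboolP; exists b. Qed.
Lemma dinv_out : {in [predC dunit], dinv =1 id}.
Proof.
move=> a Ha; rewrite /dinv; case: pselect => [H'|//].
by move: Ha; rewrite /in_mem /= /dunit asboolT.
Qed.
HB.instance Definition _ := GRing.ComNzRing_hasMulInverse.Build Dt dmulVx dunitPl dinv_out.

Lemma dintegral : GRing.integral_domain_axiom Dt.
Proof.
move=> a b /(congr1 dval) /= ab.
have [a0|b0] := dom (eqP (dP a)) (eqP (dP b)) ab.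
  by apply/orP; left; apply/eqP/dvalK.
by apply/orP; right; apply/eqP/dvalK.
Qed.
HB.instance Definition _ := GRing.ComUnitRing_isIntegral.Build Dt dintegral.

Lemma fD_proof (r : R) : x * (r * (1 - x)) == 0.
Proof. by rewrite mulrCA (eqP done_proof) mulr0. Qed.
Definition fD (r : R) : Dt := MkDt (fD_proof r).
Definition fiso (r : R) : ('Z_2 * Dt)%type := ((x * r != 0)%:R, fD r).

Lemma Z2_11 : (1 + 1 = 0 :> 'Z_2)%R.
Proof. by apply/val_inj. Qed.
Lemma Z2_10 : (1 != 0 :> 'Z_2)%R.
Proof. by []. Qed.

Lemma xr_x (r : R) : x * r = x -> r * x = x.
Proof. by rewrite mulrC. Qed.

Lemma fiso_iso : ring_iso fiso.
Proof.
split.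
  pose g (p : ('Z_2 * Dt)%type) := (if p.1 == 0 then 0 else x) + dval p.2.
  exists g.
    move=> r; rewrite /g /fiso /=.
    case: (F3 r) => H; rewrite H ?eqxx ?x0 /=.
      by rewrite add0r mulrBr mulr1 [r * x]mulrC H subr0.
    by rewrite mulrBr mulr1 [r * x]mulrC H addrCA subrr addr0.
  move=> [b d]; rewrite /g /fiso /=.
  have dx := dxa d.
  have db : b = 0 \/ b = 1.
    case: b => [[|[|k]] Hk]; [left|right|by []]; by apply/val_inj.
  case: db => ->; rewrite ?eqxx ?Z2_10 /=.
    rewrite add0r (eqP (dP d)) eqxx; congr pair; apply: dvalK => /=.
    by rewrite mulrBr mulr1 dx subr0.
  rewrite mulrDr xx (eqP (dP d)) addr0 x0; congr pair; apply: dvalK => /=.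
  by rewrite mulrBr mulr1 mulrDl xx dx addr0 addrAC subrr add0r.
split.
- rewrite /fiso mulr1 x0; congr pair; apply: dvalK => /=; by rewrite mul1r.
- move=> r s; rewrite /fiso; congr pair.
    rewrite mulrDr; case: (F3 r) => ->; case: (F3 s) => ->;
      rewrite ?addr0 ?add0r ?x2 ?eqxx ?x0 /= ?addr0 ?add0r //.
    by rewrite Z2_11.
  by apply: dvalK => /=; rewrite mulrDl.
- move=> r s; rewrite /fiso; congr pair.
    have -> : x * (r * s) = (x * r) * (x * s) by rewrite mulrACA xx mulrA.
    case: (F3 r) => ->; case: (F3 s) => ->;
      rewrite ?mulr0 ?mul0r ?xx ?eqxx ?x0 /= ?mulr0 ?mul0r ?mulr1 //.
  apply: dvalK => /=.
  have e : (1 - x) * (1 - x) = 1 - x.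
    by rewrite mulrBr mulr1 mulrBl mul1r xx subrr subr0.
  by rewrite mulrACA e.
Qed.

Lemma dom_iso : exists (D : idomainType) (f : R -> ('Z_2 * D)%type), ring_iso f.
Proof. by exists Dt, fiso; exact: fiso_iso. Qed.

End DomCons.

Section Ring.
Variable R : comNzRingType.
Implicit Types (X Y : set R) (x y z u v a : R).

Definition iso X x := X x /\ forall y, X y -> x * y != 0.

Lemma zstar_ne0 x : zdiv_star R x -> x != 0.
Proof. by case. Qed.

Lemma zstarI x y : x != 0 -> y != 0 -> x * y = 0 -> zdiv_star R x.
Proof. by move=> x0 y0 xy; split => //; exists y. Qed.

Lemma total_dom X : total_dominating X -> dominating X.
Proof. by move=> [XZ H]; split => // v Zv _; exact: H. Qed.

Lemma dom_zstar : dominating (zdiv_star R).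
Proof. by split => // v Zv []. Qed.

Lemma total_zstar : total_dominating (zdiv_star R).
Proof.
split => // v [v0 [y [y0 vy]]]; exists y.
  by apply: (zstarI y0 v0); rewrite mulrC.
by rewrite /zd_adj mulrC.
Qed.

Lemma repair_gen X x x' u u' :
  dominating X -> X x -> (forall y, X y -> x * y != 0) -> X x' -> x' != x ->
  zdiv_star R u -> zdiv_star R u' -> u * u' = 0 ->
  (forall v, x * v = 0 -> u * v = 0 \/ u' * v = 0) ->
  (forall v, x' * v = 0 -> u * v = 0 \/ u' * v = 0) ->
  (u * x = 0 \/ u' * x = 0) ->
  (u * x' = 0 \/ u' * x' = 0 \/ exists2 y, X y & [/\ y != x, y != x' & y * x' = 0]) ->
  (forall z, z * x' = 0 -> z * u = 0 \/ z * u' = 0) ->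
  dominating ((fun z => if z == x then u else if z == x' then u' else z) @` X) /\
  (forall z, iso ((fun z => if z == x then u else if z == x' then u' else z) @` X) z ->
     iso X z /\ z != x).
Proof.
move=> [XZ Xdom] Xx xiso Xx' x'x Zu Zu' uu' Px Px' P3 P4 P5.
set h := (fun z => if z == x then u else if z == x' then u' else z).
have hx : h x = u by rewrite /h eqxx.
have hx' : h x' = u' by rewrite /h eqxx (negPf x'x).
have hy : forall y, y != x -> y != x' -> h y = y.
  by move=> y yx yx'; rewrite /h (negPf yx) (negPf yx').
have Xu : (h @` X) u by exists x.
have Xu' : (h @` X) u' by exists x'.
have Xy : forall y, X y -> y != x -> y != x' -> (h @` X) y.
  by move=> y Xy yx yx'; exists y => //; rewrite hy.
split.
  split.
    move=> _ [w Xw <-]; have [->|wx] := eqVneq w x; first by rewrite hx.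
    have [->|wx'] := eqVneq w x'; first by rewrite hx'.
    by rewrite hy //; exact: XZ.
  move=> v Zv nv.
  have cov : forall y, y * v = 0 -> (y = x \/ y = x' \/ (h @` X) y) ->
     exists2 x0, (h @` X) x0 & zd_adj x0 v.
    move=> y yv [Ey|[Ey|Hy]].
    - by rewrite Ey in yv; case: (Px v yv) => H; [exists u|exists u'].
    - by rewrite Ey in yv; case: (Px' v yv) => H; [exists u|exists u'].
    - by exists y.
  have [Xv|nXv] := pselect (X v).
    have [vx|vx] := eqVneq v x.
      by rewrite vx; case: P3 => H; [exists u|exists u'].
    have [vx'|vx'] := eqVneq v x'.
      rewrite vx'; case: P4 => [H|[H|[y Xy0 [yx yx' yx'0]]]]; [exists u|exists u'|exists y] => //.
      exact: Xy.
    by case: nv; exact: Xy.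
  have [y Xy0 yv] := Xdom v Zv nXv.
  apply: (cov y yv).
  have [->|yx] := eqVneq y x; first by left.
  have [->|yx'] := eqVneq y x'; first by right; left.
  by right; right; exact: Xy.
move=> z [[w Xw hwz] zi].
have [wx|wx] := eqVneq w x.
  move: hwz; rewrite wx hx => zu.
  by have /eqP := zi _ Xu'; rewrite -zu.
have [wx'|wx'] := eqVneq w x'.
  move: hwz; rewrite wx' hx' => zu.
  by have /eqP := zi _ Xu; rewrite -zu mulrC.
move: hwz; rewrite hy // => zw; subst w.
split; last by [].
split => // y Xy0.
have [->|yx] := eqVneq y x; first by rewrite mulrC; exact: xiso.
have [->|yx'] := eqVneq y x'.
  apply/eqP => zx'; case: (P5 _ zx') => H.
  - by have /eqP := zi _ Xu.
  - by have /eqP := zi _ Xu'.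
by apply: zi; exact: Xy.
Qed.


Lemma repair X x x' : dominating X -> iso X x -> X x' -> x' != x ->
  exists X', [/\ dominating X', (X' #<= X)%card & forall z, iso X' z -> iso X z /\ z != x].
Proof.
move=> Xd [Xx xiso] Xx' x'x.
have [XZ _] := Xd.
have [x0 [y [y0 xy]]] := XZ x Xx.
have xx'0 : x * x' != 0 := xiso _ Xx'.
case: (pselect (exists a, [/\ a != 0, a * x = 0 & (a * x' = 0 \/ ~ iso X x')])) =>
  [[a [a0 ax Ha]]|nE].
  have := @repair_gen X x x' a (x * x') Xd Xx xiso Xx' x'x (zstarI a0 x0 ax).
  have u'a : x * x' * a = 0 by rewrite mulrAC [x * a]mulrC ax mul0r.
  move=> /(_ (zstarI xx'0 a0 u'a)).
  have -> : a * (x * x') = 0 by rewrite mulrA ax mul0r.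
  move=> /(_ erefl).
  have P2 : forall v, x * v = 0 -> a * v = 0 \/ x * x' * v = 0.
    by move=> v xv; right; rewrite mulrAC xv mul0r.
  have P2' : forall v, x' * v = 0 -> a * v = 0 \/ x * x' * v = 0.
    by move=> v xv; right; rewrite -mulrA xv mulr0.
  move=> /(_ P2 P2' (or_introl ax)).
  have P4 : a * x' = 0 \/ x * x' * x' = 0 \/
      exists2 y, X y & [/\ y != x, y != x' & y * x' = 0].
    case: Ha => [H|ni]; first by left.
    have [y1 [Xy1 x'y1]] : exists y1, X y1 /\ x' * y1 = 0.
      apply: contrapT => H; apply: ni; split => // y1 Xy1; apply/eqP => E.
      by apply: H; exists y1.
    have [Ey|y1x] := eqVneq y1 x.
      by move: xx'0; rewrite -Ey mulrC x'y1 eqxx.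
    have [Ey|y1x'] := eqVneq y1 x'.
      by right; left; rewrite -mulrA -{2}Ey x'y1 mulr0.
    by right; right; exists y1 => //; split => //; rewrite mulrC.
  move=> /(_ P4).
  have P5 : forall z, z * x' = 0 -> z * a = 0 \/ z * (x * x') = 0.
    by move=> z zx'; right; rewrite mulrCA zx' mulr0.
  move=> /(_ P5) [Hd Hi].
  by eexists; split; [exact: Hd|exact: card_image_le|exact: Hi].
have yx' : y * x' != 0.
  apply/eqP => H; apply: nE; exists y; split => //; first by rewrite mulrC.
  by left.
have [x'0 [y' [y'0 x'y']]] := XZ x' Xx'.
have y'x : y' * x != 0.
  apply/eqP => H; apply: nE; exists y'; split => //; left; by rewrite mulrC.
have u0 : x * y' != 0 by rewrite mulrC.
have u'0 : x' * y != 0 by rewrite mulrC.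
have uu' : x * y' * (x' * y) = 0 by rewrite [x' * y]mulrC mulrACA xy mul0r.
have := @repair_gen X x x' (x * y') (x' * y) Xd Xx xiso Xx' x'x (zstarI u0 u'0 uu').
have u'u : x' * y * (x * y') = 0 by rewrite mulrC.
move=> /(_ (zstarI u'0 u0 u'u) uu').
have P2 : forall v, x * v = 0 -> x * y' * v = 0 \/ x' * y * v = 0.
  by move=> v xv; left; rewrite mulrAC xv mul0r.
have P2' : forall v, x' * v = 0 -> x * y' * v = 0 \/ x' * y * v = 0.
  by move=> v xv; right; rewrite mulrAC xv mul0r.
have P3 : x * y' * x = 0 \/ x' * y * x = 0.
  by right; rewrite -mulrA [y * x]mulrC xy mulr0.
have P4 : x * y' * x' = 0 \/ x' * y * x' = 0 \/
      exists2 y, X y & [/\ y != x, y != x' & y * x' = 0].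
  by left; rewrite -mulrA [y' * x']mulrC x'y' mulr0.
have P5 : forall z, z * x' = 0 -> z * (x * y') = 0 \/ z * (x' * y) = 0.
  by move=> z zx'; right; rewrite mulrA zx' mul0r.
move=> /(_ P2 P2' P3 P4 P5) [Hd Hi].
by eexists; split; [exact: Hd|exact: card_image_le|exact: Hi].
Qed.

Lemma no_iso_total X : dominating X -> (forall z, ~ iso X z) -> total_dominating X.
Proof.
move=> [XZ Xd] ni; split => // v Zv.
have [Xv|nXv] := pselect (X v); last exact: Xd.
have [y [Xy vy]] : exists y, X y /\ v * y = 0.
  apply: contrapT => H; apply: (ni v); split => // y Xy; apply/eqP => E.
  by apply: H; exists y.
by exists y => //; rewrite /zd_adj mulrC.
Qed.

Lemma single_good X x w : dominating X -> X x -> (forall y, X y -> y = x) ->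
  w != 0 -> w * x = 0 -> (forall a, x * a = 0 -> w * a = 0) ->
  exists Y, total_dominating Y /\ (Y #<= X)%card.
Proof.
move=> [XZ Xd] Xx Xone w0 wx wa.
have [x0 _] := XZ x Xx.
exists [set w]; split.
  split; first by move=> _ ->; exact: zstarI w0 x0 wx.
  move=> v Zv; exists w => //; rewrite /zd_adj.
  have [Xv|nXv] := pselect (X v); first by rewrite (Xone _ Xv).
  have [y Xy yv] := Xd v Zv nXv; apply: wa; move: yv; by rewrite /zd_adj (Xone _ Xy).
have -> : [set w] = (fun _ => w) @` X.
  by apply/seteqP; split => [_ ->|_ [_ _ <-] //]; exists x.
exact: card_image_le.
Qed.


Lemma to_iso X x : dominating X -> X x -> (forall y, X y -> y = x) -> x * x != 0 ->
  ~ (exists w, [/\ w != 0, w * x = 0 & forall a, x * a = 0 -> w * a = 0]) ->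
  exists (D : idomainType) (f : R -> ('Z_2 * D)%type), ring_iso f.
Proof.
move=> [XZ Xd] Xx Xone xx0 nw.
have [x0 [y [y0 xy]]] := XZ x Xx.
have F1 : forall v, v != 0 -> (exists b, b != 0 /\ v * b = 0) -> v != x -> x * v = 0.
  move=> v v0 vb vx.
  have nXv : ~ X v by move=> /Xone E; move: vx; rewrite E eqxx.
  have [y' Xy' y'v] := Xd v (conj v0 vb) nXv.
  by move: y'v; rewrite /zd_adj (Xone _ Xy').
have xx : x * x = x.
  have [//|nE] := eqVneq (x * x) x.
  have H := F1 _ xx0 (ex_intro _ y (conj y0 (etrans (esym (mulrA x x y)) (etrans (congr1 (GRing.mul x) xy) (mulr0 x))))) nE.
  exfalso; apply: nw; exists (x * x); split => //.
    by rewrite mulrC.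
  by move=> a xa; rewrite -mulrA xa mulr0.
have F3 : forall r, x * r = 0 \/ x * r = x.
  move=> r; have [E|nE] := eqVneq (x * r) 0; [by left|right].
  have [//|nE'] := eqVneq (x * r) x.
  have H : x * (x * r) = 0.
    apply: F1 nE _ nE'; exists y; split => //; by rewrite mulrAC xy mul0r.
  exfalso; apply: nw; exists (x * r); split => //.
    by rewrite mulrC.
  by move=> a xa; rewrite mulrAC xa mul0r.
have x2 : x + x = 0.
  have := F3 (1 + 1); rewrite mulrDr mulr1 => -[//|E].
  have x0' : x = 0 by apply: (@addrI _ x); rewrite addr0.
  by move: x0; rewrite x0' eqxx.
have x1 : x != 1.
  by apply/eqP => E; move: xy; rewrite E mul1r => /eqP; rewrite (negPf y0).
have dom : forall a b, x * a = 0 -> x * b = 0 -> a * b = 0 -> a = 0 \/ b = 0.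
  move=> a b xa xb ab.
  have [->|a0] := eqVneq a 0; first by left.
  have [->|b0] := eqVneq b 0; first by right.
  exfalso.
  have v0 : a + x != 0.
    apply/eqP => E; have := congr1 (GRing.mul x) E.
    by rewrite mulrDr xa xx add0r mulr0 => /eqP; rewrite (negPf x0).
  have vx : a + x != x.
    by apply/eqP => /eqP; rewrite -subr_eq0 addrK => /eqP E; move: a0; rewrite E eqxx.
  have vb : (a + x) * b = 0 by rewrite mulrDl ab xb addr0.
  have := F1 _ v0 (ex_intro _ b (conj b0 vb)) vx.
  by rewrite mulrDr xa xx add0r => E; move: x0; rewrite E eqxx.
exact: dom_iso xx x1 x0 x2 F3 dom.
Qed.

Lemma fin_total (Hni : ~ (exists (D : idomainType) (f : R -> ('Z_2 * D)%type), ring_iso f)) :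
  forall n (s : seq R) X, (size s <= n)%N -> dominating X ->
  (forall z, iso X z -> z \in s) -> exists Y, total_dominating Y /\ (Y #<= X)%card.
Proof.
elim => [|n IH] s X sn Xd Hs.
  have [[x xi]|ni] := pselect (exists z, iso X z); last first.
    exists X; split => //; apply: no_iso_total => // z zi; apply: ni; by exists z.
  by move: (Hs _ xi) sn; clear Hs; case: s.
have [[x xi]|ni] := pselect (exists z, iso X z); last first.
  exists X; split => //; apply: no_iso_total => // z zi; apply: ni; by exists z.
have [[x' [Xx' x'x]]|nx'] := pselect (exists x', X x' /\ x' != x).
  have [X' [X'd X'X X'i]] := repair Xd xi Xx' x'x.
  have xs : x \in s := Hs _ xi.
  have sz : (size (filter (predC1 x) s) <= n)%N.
    rewrite size_filter.
    have : (count (pred1 x) s + count (predC1 x) s = size s)%N by exact: count_predC.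
    have : (0 < count (pred1 x) s)%N by rewrite -has_count has_pred1.
    move: sn; lia.
  have Hs' : forall z, iso X' z -> z \in filter (predC1 x) s.
    move=> z /X'i [zi zx]; rewrite mem_filter /= zx; exact: Hs.
  have [Y [Yt YX']] := IH (filter (predC1 x) s) X' sz X'd Hs'.
  by exists Y; split => //; exact: card_le_trans YX' X'X.
have [Xx xiso] := xi.
have Xone : forall y, X y -> y = x.
  move=> y Xy; apply: contrapT => yx; apply: nx'; exists y; split => //; exact/eqP.
have [[w [w0 wx wa]]|nw] := pselect
    (exists w, [/\ w != 0, w * x = 0 & forall a, x * a = 0 -> w * a = 0]).
  exact: single_good Xd Xx Xone w0 wx wa.
by case: Hni; apply: to_iso Xd Xx Xone (xiso _ Xx) nw.
Qed.

Lemma main_total (Hni : ~ (exists (D : idomainType) (f : R -> ('Z_2 * D)%type), ring_iso f))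
   X : dominating X -> exists Y, total_dominating Y /\ (Y #<= X)%card.
Proof.
move=> Xd.
have [Xf|Xinf] := pselect (finite_set X).
  have : finite_set (iso X) by apply: sub_finite_set Xf => z [].
  move=> /finite_seqP [s sE].
  apply: (fin_total Hni (leqnn (size s)) Xd) => z zi.
  by have : [set` s] z by rewrite -sE.
have [XZ Xdom] := Xd.
pose nf x := xget 0 [set y | y != 0 /\ x * y = 0].
have nfP : forall x, X x -> nf x != 0 /\ x * nf x = 0.
  move=> x Xx; have [x0 [y Hy]] := XZ x Xx.
  exact: (@xgetPex _ 0 [set y | y != 0 /\ x * y = 0] (ex_intro _ y Hy)).
pose g (p : (R * bool)%type) := if snd p then fst p else nf (fst p).
exists (g @` (X `*` [set: bool])); split.
  split.
    move=> _ [[x b] [/= Xx _] <-]; rewrite /g /=; case: b; first exact: XZ.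
    have [x0 _] := XZ x Xx; have [n0 xn] := nfP x Xx.
    by apply: (zstarI n0 x0); rewrite mulrC.
  move=> v Zv; have [Xv|nXv] := pselect (X v).
    exists (nf v); first by exists (v, false).
    by rewrite /zd_adj mulrC; exact: (nfP v Xv).2.
  have [y Xy yv] := Xdom v Zv nXv; exists y => //; by exists (y, true).
exact: card_le_trans (card_image_le _ _) (card_Xbool Xinf).
Qed.

End Ring.

Theorem theorem1p1 (R : comNzRingType) :
  (exists x y : R, [/\ x != 0, y != 0 & x * y = 0]) ->
  ~ (exists (D : idomainType) (f : R -> ('Z_2 * D)%type), ring_iso f) ->
  gammat_eq_gamma R.
Proof.
move=> _ Hni.
have [X [Xd Xmin]] := min_card_exists (@dom_zstar R).
have [Y [Yt Ymin]] := min_card_exists (@total_zstar R).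
exists X, Y; split; [by split|by split|].
apply: Cantor_Bernstein; first exact: Xmin (total_dom Yt).
have [Y' [Y't Y'X]] := main_total Hni Xd.
exact: card_le_trans (Ymin _ Y't) Y'X.
Qed.
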